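(* Let $\theta\mapsto (p_x(\theta),p_y(\theta),p_z(\theta))$ be differentiable with $p_x,p_y,p_z\ge0$ and $p_x+p_y+p_z\le1$, and consider the qubit channels \[ \Lambda_\theta(\rho)=(1-p_x-p_y-p_z)\rho+p_xX\rho X+p_yY\rho Y+p_zZ\rho Z, \] with $X,Y,Z$ the Pauli matrices. Let $q_\theta=(1-p_x(\theta)-p_y(\theta)-p_z(\theta),\,p_x(\theta),\,p_y(\theta),\,p_z(\theta))$, $\delta_\theta=\mathrm{d}q_\theta/\mathrm{d}\theta$ and $\Delta_\theta=\mathrm{d}\Lambda_\theta/\mathrm{d}\theta$. Then \[ G^{\min}_{\Lambda_\theta}(\Delta_\theta)=G^{\max}_{\Lambda_\theta}(\Delta_\theta)=J_{q_\theta}(\delta_\theta). \]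
   Context: A channel is a CPTP linear map; a tangent vector $\Delta$ at a channel $\Phi$ is a Hermiticity-preserving linear map with $\mathrm{tr}\,\Delta(X)=0$ for all $X$. A POVM $M$ is identified with the channel $\sigma\mapsto(\mathrm{tr}\,\sigma M_y)_y$. For a probability distribution $p$ on a finite set and real $\delta$ with $\sum_y\delta(y)=0$, $J_p(\delta)=\sum_y\delta(y)^2/p(y)$ (with $0/0=0$, $c/0=\infty$ for $c\neq0$). $G^{\min}_\Phi(\Delta):=\sup J_{M((\Phi\otimes\mathbf I)(\rho))}\big(M((\Delta\otimes\mathbf I)(\rho))\big)$ over all finite-dimensional auxiliary spaces $\mathcal K$, states $\rho$ on $\mathcal H_{\rm in}\otimes\mathcal K$ and POVMs $M$ on $\mathcal H_{\rm out}\otimes\mathcal K$. A classical tangent simulation of $(\Phi,\Delta)$ is a triple $(q,\delta,\Lambda)$: $q$ a probability distribution on a finite set $Y$, $\delta$ real on $Y$ with $\sum_y\delta(y)=0$, $\Lambda$ a channel from $\mathcal H_{\rm in}\otimes\mathbb C^Y$ to $\mathcal H_{\rm out}$ with $\Phi(X)=\Lambda(X\otimes q)$ and $\Delta(X)=\Lambda(X\otimes\delta)$ for all $X$ ($q,\delta$ as diagonal operators). $G^{\max}_\Phi(\Delta):=\inf J_q(\delta)$ over all such simulations ($\inf\emptyset=\infty$). *)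

(* Defs.v *)
From Stdlib Require Import Reals Lra Lia Arith.
Open Scope R_scope.

Record C := mkC { Re : R; Im : R }.
Definition RtoC (r : R) : C := mkC r 0.
Definition C0 : C := RtoC 0.
Definition C1 : C := RtoC 1.
Definition Ci : C := mkC 0 1.
Definition Cadd (a b : C) : C := mkC (Re a + Re b) (Im a + Im b).
Definition Copp (a : C) : C := mkC (- Re a) (- Im a).
Definition Cmul (a b : C) : C :=
  mkC (Re a * Re b - Im a * Im b) (Re a * Im b + Im a * Re b).
Definition Cconj (a : C) : C := mkC (Re a) (- Im a).

Fixpoint csum (n : nat) (f : nat -> C) : C :=
  match n with O => C0 | S m => Cadd (csum m f) (f m) end.
Fixpoint rsum (n : nat) (f : nat -> R) : R :=
  match n with O => 0 | S m => rsum m f + f m end.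

(* A matrix of size n is a function nat -> nat -> C of which only the entries
   with indices < n are meaningful. *)
Definition Mat := nat -> nat -> C.
Definition meq (n : nat) (A B : Mat) : Prop :=
  forall i j, (i < n)%nat -> (j < n)%nat -> A i j = B i j.
Definition mmul (n : nat) (A B : Mat) : Mat :=
  fun i j => csum n (fun k => Cmul (A i k) (B k j)).
Definition mtrace (n : nat) (A : Mat) : C := csum n (fun i => A i i).
Definition Hermitian (n : nat) (A : Mat) : Prop :=
  forall i j, (i < n)%nat -> (j < n)%nat -> A i j = Cconj (A j i).
Definition PSD (n : nat) (A : Mat) : Prop :=
  Hermitian n A /\
  forall v : nat -> C,
    0 <= Re (csum n (fun i => csum n (fun j =>
                 Cmul (Cmul (Cconj (v i)) (A i j)) (v j)))).
Definition state (n : nat) (rho : Mat) : Prop := PSD n rho /\ mtrace n rho = C1.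
Definition POVM (n m : nat) (M : nat -> Mat) : Prop :=
  (forall y, (y < m)%nat -> PSD n (M y)) /\
  forall i j, (i < n)%nat -> (j < n)%nat ->
    csum m (fun y => M y i j) = (if Nat.eqb i j then C1 else C0).

(* A linear map M_din -> M_dout is given by its coefficients T:
   (T X)_{ij} = sum_{k,l < din} T i j k l * X_{kl}. *)
Definition LMap := nat -> nat -> nat -> nat -> C.
Definition apply (din : nat) (T : LMap) (X : Mat) : Mat :=
  fun i j => csum din (fun k => csum din (fun l => Cmul (T i j k l) (X k l))).

(* Tensor-product index convention: (i,a) in [din] x [k]  <->  i*k + a. *)
(* (T (x) id_k)(X) for X on C^din (x) C^k. *)
Definition tens_id (din k : nat) (T : LMap) (X : Mat) : Mat :=
  fun r c => apply din T (fun i j => X (i * k + r mod k)%nat (j * k + c mod k)%nat)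
                   (r / k)%nat (c / k)%nat.
(* X (x) diag(v) on C^d (x) C^n, v a real vector on {0..n-1}. *)
Definition ten_diag (n : nat) (X : Mat) (v : nat -> R) : Mat :=
  fun r c => if Nat.eqb (r mod n) (c mod n)
             then Cmul (X (r / n)%nat (c / n)%nat) (RtoC (v (r mod n)))
             else C0.

Definition CP (din dout : nat) (T : LMap) : Prop :=
  forall (k : nat) (X : Mat), PSD (din * k) X -> PSD (dout * k) (tens_id din k T X).
Definition TP (din dout : nat) (T : LMap) : Prop :=
  forall X : Mat, mtrace dout (apply din T X) = mtrace din X.
Definition channel (din dout : nat) (T : LMap) : Prop := CP din dout T /\ TP din dout T.

Inductive ER := Fin (r : R) | Inf.
Definition ERadd (x y : ER) : ER :=
  match x, y with Fin a, Fin b => Fin (a + b) | _, _ => Inf end.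
Definition ERle (x y : ER) : Prop :=
  match x, y with
  | _, Inf => True
  | Inf, Fin _ => False
  | Fin a, Fin b => a <= b
  end.
Definition is_sup (S : ER -> Prop) (v : ER) : Prop :=
  (forall x, S x -> ERle x v) /\ (forall u, (forall x, S x -> ERle x u) -> ERle v u).
Definition is_inf (S : ER -> Prop) (v : ER) : Prop :=
  (forall x, S x -> ERle v x) /\ (forall u, (forall x, S x -> ERle u x) -> ERle u v).

(* d^2/p with 0/0 = 0 and c/0 = infinity for c <> 0 *)
Definition Jterm (p d : R) : ER :=
  if Req_dec_T p 0 then (if Req_dec_T d 0 then Fin 0 else Inf) else Fin (d * d / p).
Fixpoint Jfun (n : nat) (p d : nat -> R) : ER :=
  match n with O => Fin 0 | S m => ERadd (Jfun m p d) (Jterm (p m) (d m)) end.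

Definition probdist (n : nat) (q : nat -> R) : Prop :=
  (forall y, (y < n)%nat -> 0 <= q y) /\ rsum n q = 1.

(* values J_{M((Phi(x)I)(rho))}(M((Delta(x)I)(rho))) over aux. dim k, states
   rho on C^din (x) C^k, POVMs M on C^dout (x) C^k with m outcomes *)
Definition Gmin_values (din dout : nat) (Phi Delta : LMap) (x : ER) : Prop :=
  exists (k : nat) (rho : Mat) (m : nat) (M : nat -> Mat),
    state (din * k) rho /\ POVM (dout * k) m M /\
    x = Jfun m
          (fun y => Re (mtrace (dout * k) (mmul (dout * k) (tens_id din k Phi rho) (M y))))
          (fun y => Re (mtrace (dout * k) (mmul (dout * k) (tens_id din k Delta rho) (M y)))).
Definition Gmin_is (din dout : nat) (Phi Delta : LMap) (v : ER) : Prop :=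
  is_sup (Gmin_values din dout Phi Delta) v.

Definition tangent_sim (din dout : nat) (Phi Delta : LMap)
    (n : nat) (q delta : nat -> R) (L : LMap) : Prop :=
  probdist n q /\ rsum n delta = 0 /\ channel (din * n) dout L /\
  (forall X : Mat, meq dout (apply din Phi X) (apply (din * n) L (ten_diag n X q))) /\
  (forall X : Mat, meq dout (apply din Delta X) (apply (din * n) L (ten_diag n X delta))).
Definition Gmax_values (din dout : nat) (Phi Delta : LMap) (x : ER) : Prop :=
  exists (n : nat) (q delta : nat -> R) (L : LMap),
    tangent_sim din dout Phi Delta n q delta L /\ x = Jfun n q delta.
Definition Gmax_is (din dout : nat) (Phi Delta : LMap) (v : ER) : Prop :=
  is_inf (Gmax_values din dout Phi Delta) v.

(* sigma_0 = I, sigma_1 = X, sigma_2 = Y, sigma_3 = Z *)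
Definition pauli (y : nat) : Mat :=
  fun i j =>
    match y, i, j with
    | 0, 0, 0 => C1 | 0, 1, 1 => C1
    | 1, 0, 1 => C1 | 1, 1, 0 => C1
    | 2, 0, 1 => Copp Ci | 2, 1, 0 => Ci
    | 3, 0, 0 => C1 | 3, 1, 1 => Copp C1
    | _, _, _ => C0
    end%nat.
(* rho |-> sum_y q_y sigma_y rho sigma_y *)
Definition pauli_chan (q : nat -> R) : LMap :=
  fun i j k l => csum 4 (fun y => Cmul (Cmul (RtoC (q y)) (pauli y i k)) (pauli y l j)).
Definition qvec (px py pz : R) : nat -> R :=
  fun y => match y with
           | O => 1 - px - py - pz | S O => px | S (S O) => py
           | S (S (S O)) => pz | _ => 0 end.

(* Main.v *)
From Stdlib Require Import Reals Lra Lia Arith Psatz FunctionalExtensionality.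
Require Import Defs.
Open Scope R_scope.

Lemma C_ext (a b : C) : Re a = Re b -> Im a = Im b -> a = b.
Proof. destruct a, b; simpl; intros; subst; reflexivity. Qed.

Ltac Csimpl := unfold Cadd, Cmul, Copp, Cconj, RtoC, C0, C1, Ci in *; simpl in *.
Ltac Cring := apply C_ext; Csimpl; ring.

Lemma csum_ext n f g : (forall i, (i < n)%nat -> f i = g i) -> csum n f = csum n g.
Proof. induction n; simpl; intros; auto. rewrite IHn, H; auto. Qed.

Lemma Re_csum n f : Re (csum n f) = rsum n (fun i => Re (f i)).
Proof. induction n; simpl; auto. rewrite IHn; reflexivity. Qed.
Lemma Im_csum n f : Im (csum n f) = rsum n (fun i => Im (f i)).
Proof. induction n; simpl; auto. rewrite IHn; reflexivity. Qed.

Lemma csum_add n f g : csum n (fun i => Cadd (f i) (g i)) = Cadd (csum n f) (csum n g).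
Proof. induction n; simpl. Cring. rewrite IHn. Cring. Qed.
Lemma csum_mull n c f : Cmul c (csum n f) = csum n (fun i => Cmul c (f i)).
Proof. induction n; simpl. Cring. rewrite <- IHn. Cring. Qed.
Lemma csum_mulr n c f : Cmul (csum n f) c = csum n (fun i => Cmul (f i) c).
Proof. induction n; simpl. Cring. rewrite <- IHn. Cring. Qed.
Lemma csum_conj n f : Cconj (csum n f) = csum n (fun i => Cconj (f i)).
Proof. induction n; simpl. Cring. rewrite <- IHn. Cring. Qed.
Lemma csum_zero n f : (forall i, (i < n)%nat -> f i = C0) -> csum n f = C0.
Proof. induction n; simpl; intros; auto. rewrite IHn, H; auto. Cring. Qed.
Lemma csum_swap n m (f : nat -> nat -> C) :
  csum n (fun i => csum m (fun j => f i j)) = csum m (fun j => csum n (fun i => f i j)).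
Proof.
  induction n; simpl. symmetry; apply csum_zero; auto.
  rewrite IHn, <- csum_add. reflexivity.
Qed.
Lemma csum_app m k f : csum (m + k) f = Cadd (csum m f) (csum k (fun a => f (m + a)%nat)).
Proof.
  induction k; simpl. rewrite Nat.add_0_r. Cring.
  rewrite Nat.add_succ_r; simpl. rewrite IHk. Cring.
Qed.
Lemma csum_block n k f :
  csum (n * k) f = csum n (fun i => csum k (fun a => f (i * k + a)%nat)).
Proof.
  induction n; simpl; auto.
  replace (k + n * k)%nat with (n * k + k)%nat by lia.
  rewrite csum_app, IHn. reflexivity.
Qed.
Lemma csum_single n p f : (p < n)%nat -> (forall i, (i < n)%nat -> i <> p -> f i = C0) ->
  csum n f = f p.
Proof.
  induction n; intros; [lia|]. simpl.
  destruct (Nat.eq_dec p n).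
  - subst. rewrite csum_zero. Cring. intros; apply H0; lia.
  - rewrite IHn by (auto; lia). rewrite (H0 n) by lia. Cring.
Qed.
Lemma csum_split4 n f g h k : csum n (fun i => Cadd (Cadd (f i) (g i)) (Cadd (h i) (k i))) =
  Cadd (Cadd (csum n f) (csum n g)) (Cadd (csum n h) (csum n k)).
Proof. rewrite !csum_add. reflexivity. Qed.

Lemma rsum_ext n f g : (forall i, (i < n)%nat -> f i = g i) -> rsum n f = rsum n g.
Proof. induction n; simpl; intros; auto. rewrite IHn, H; auto. Qed.
Lemma rsum_nonneg n f : (forall i, (i < n)%nat -> 0 <= f i) -> 0 <= rsum n f.
Proof. induction n; simpl; intros. lra. assert (0 <= f n) by (apply H; lia). assert (0 <= rsum n f) by (apply IHn; intros; apply H; lia). lra. Qed.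
Lemma rsum_add n f g : rsum n (fun i => f i + g i) = rsum n f + rsum n g.
Proof. induction n; simpl; [lra|]. rewrite IHn; lra. Qed.
Lemma rsum_scal n c f : rsum n (fun i => c * f i) = c * rsum n f.
Proof. induction n; simpl; [lra|]. rewrite IHn; lra. Qed.
Lemma rsum_le n f g : (forall i, (i < n)%nat -> f i <= g i) -> rsum n f <= rsum n g.
Proof. induction n; simpl; intros. lra. assert (f n <= g n) by (apply H; lia). assert (rsum n f <= rsum n g) by (apply IHn; intros; apply H; lia). lra. Qed.
Lemma rsum_swap n m (f : nat -> nat -> R) :
  rsum n (fun i => rsum m (fun j => f i j)) = rsum m (fun j => rsum n (fun i => f i j)).
Proof.
  induction n; simpl.
  - induction m; simpl; auto. rewrite <- IHm; lra.
  - rewrite IHn, <- rsum_add. reflexivity.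
Qed.

Lemma divmod_l k i a : (a < k)%nat -> ((i * k + a) / k = i)%nat.
Proof. intros. rewrite Nat.div_add_l by lia. rewrite Nat.div_small by lia. lia. Qed.
Lemma divmod_r k i a : (a < k)%nat -> ((i * k + a) mod k = a)%nat.
Proof. intros. rewrite Nat.add_comm, Nat.Div0.mod_add. apply Nat.mod_small; auto. Qed.
Lemma idx_lt d k i a : (i < d)%nat -> (a < k)%nat -> (i * k + a < d * k)%nat.
Proof. intros. nia. Qed.

Definition bil n (A : Mat) (v w : nat -> C) :=
  csum n (fun i => csum n (fun j => Cmul (Cmul (Cconj (v i)) (A i j)) (w j))).
Definition unitv (p : nat) (s : C) : nat -> C := fun i => if Nat.eqb i p then s else C0.
Definition vadd (v w : nat -> C) : nat -> C := fun i => Cadd (v i) (w i).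

Lemma PSD_bil n A : PSD n A -> forall v, 0 <= Re (bil n A v v).
Proof. intros [_ H] v. apply H. Qed.

Lemma csum_prod n m f g : Cmul (csum n f) (csum m g) =
  csum n (fun i => csum m (fun j => Cmul (f i) (g j))).
Proof. rewrite csum_mulr. apply csum_ext; intros. apply csum_mull. Qed.

Lemma bil_addl n A v w u : bil n A (vadd v w) u = Cadd (bil n A v u) (bil n A w u).
Proof.
  unfold bil, vadd. rewrite <- csum_add. apply csum_ext; intros.
  rewrite <- csum_add. apply csum_ext; intros. Cring.
Qed.
Lemma bil_addr n A v w u : bil n A u (vadd v w) = Cadd (bil n A u v) (bil n A u w).
Proof.
  unfold bil, vadd. rewrite <- csum_add. apply csum_ext; intros.
  rewrite <- csum_add. apply csum_ext; intros. Cring.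
Qed.
Lemma bil_unitl n A p s w : (p < n)%nat ->
  bil n A (unitv p s) w = Cmul (Cconj s) (csum n (fun j => Cmul (A p j) (w j))).
Proof.
  intros Hp. unfold bil. rewrite (csum_single n p); auto.
  - unfold unitv. rewrite Nat.eqb_refl, csum_mull. apply csum_ext; intros. Cring.
  - intros. unfold unitv. apply Nat.eqb_neq in H0. rewrite H0.
    apply csum_zero; intros. Cring.
Qed.
Lemma bil_unitr n A p s v : (p < n)%nat ->
  bil n A v (unitv p s) = Cmul (csum n (fun i => Cmul (Cconj (v i)) (A i p))) s.
Proof.
  intros Hp. unfold bil. rewrite csum_mulr. apply csum_ext; intros.
  rewrite (csum_single n p); auto.
  - unfold unitv. rewrite Nat.eqb_refl. reflexivity.
  - intros. unfold unitv. apply Nat.eqb_neq in H1. rewrite H1. Cring.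
Qed.
Lemma bil_units n A p q s t : (p < n)%nat -> (q < n)%nat ->
  bil n A (unitv p s) (unitv q t) = Cmul (Cmul (Cconj s) (A p q)) t.
Proof.
  intros. rewrite bil_unitl by auto. rewrite (csum_single n q); auto.
  - unfold unitv. rewrite Nat.eqb_refl. Cring.
  - intros. unfold unitv. apply Nat.eqb_neq in H2. rewrite H2. Cring.
Qed.

Lemma PSD_diag n A p : PSD n A -> (p < n)%nat -> 0 <= Re (A p p) /\ Im (A p p) = 0.
Proof.
  intros HA Hp. split.
  - pose proof (PSD_bil n A HA (unitv p C1)). rewrite bil_units in H by auto.
    Csimpl. nra.
  - destruct HA as [HH _]. pose proof (HH p p Hp Hp).
    apply (f_equal Im) in H. Csimpl. lra.
Qed.

Lemma PSD_row0 n A m : PSD n A -> (m < n)%nat -> A m m = C0 ->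
  forall j, (j < n)%nat -> A m j = C0.
Proof.
  intros HA Hm Hmm j Hj.
  set (a := A m j).
  set (N := Re a * Re a + Im a * Im a).
  assert (HN : N = 0).
  { destruct (Req_dec N 0); auto. exfalso.
    assert (N > 0) by (unfold N in *; nra).
    set (t := (Re (A j j) + 1) / (2 * N)).
    set (s := mkC (- t * Re a) (- t * Im a)).
    pose proof (PSD_bil n A HA (vadd (unitv m s) (unitv j C1))).
    rewrite bil_addl, !bil_addr, !bil_units in H1 by auto.
    destruct HA as [HH _]. rewrite (HH j m) in H1 by auto. fold a in H1.
    rewrite Hmm in H1. unfold s in H1. Csimpl.
    assert (t * N = (Re (A j j) + 1) / 2) by (unfold t; field; lra).
    unfold N in H2. nra. }
  unfold N in HN. apply C_ext; Csimpl; nra.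
Qed.

Definition Aschur (A : Mat) (m : nat) (a : R) : Mat :=
  fun i j => Cadd (A i j) (Cmul (RtoC (- / a)) (Cmul (A i m) (Cconj (A j m)))).

Lemma Aschur_PSD n A m : PSD n A -> (m < n)%nat -> 0 < Re (A m m) ->
  PSD n (Aschur A m (Re (A m m))).
Proof.
  intros HA Hm Ha. pose proof (PSD_diag n A m HA Hm) as [_ Him].
  destruct HA as [HH HQ]. set (a := Re (A m m)) in *. split.
  - intros i j Hi Hj. unfold Aschur. rewrite (HH i j Hi Hj). Cring.
  - intros v.
    set (beta := csum n (fun j => Cmul (A m j) (v j))).
    set (s := Cmul (RtoC (- / a)) beta).
    pose proof (HQ (vadd v (unitv m s))) as H. fold (bil n A (vadd v (unitv m s)) (vadd v (unitv m s))) in H.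
    rewrite bil_addl, !bil_addr, !bil_units, bil_unitl, bil_unitr in H by auto.
    fold beta in H.
    assert (Hg : csum n (fun i => Cmul (Cconj (v i)) (A i m)) = Cconj beta).
    { unfold beta. rewrite csum_conj. apply csum_ext; intros. rewrite (HH i m) by auto. Cring. }
    rewrite Hg in H.
    assert (Hb : bil n (Aschur A m a) v v = Cadd (bil n A v v)
        (Cmul (RtoC (- / a)) (Cmul (Cconj beta) beta))).
    { rewrite <- Hg. unfold beta. rewrite csum_prod, csum_mull.
      unfold bil. rewrite <- csum_add. apply csum_ext; intros i Hi.
      rewrite csum_mull, <- csum_add. apply csum_ext; intros j Hj.
      unfold Aschur. rewrite (HH m j) by auto. Cring. }
    fold (bil n (Aschur A m a) v v). rewrite Hb.
    assert (Amm : A m m = mkC a 0) by (apply C_ext; simpl; auto).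
    rewrite Amm in H. unfold s in H. clear Hb Hg. 
    destruct (bil n A v v) as [x y]. destruct beta as [br bi]. Csimpl.
    assert (E : x + (br * (- / a * br - 0 * bi) - - bi * (- / a * bi + 0 * br) +
           ((- / a * br - 0 * bi) * br - - (- / a * bi + 0 * br) * bi)) +
          ((- / a * br - 0 * bi) * a - - (- / a * bi + 0 * br) * 0) * (- / a * br - 0 * bi) -
          ((- / a * br - 0 * bi) * 0 + - (- / a * bi + 0 * br) * a) * (- / a * bi + 0 * br)
          = x + (- / a * (br * br - - bi * bi) - 0 * (br * bi + - bi * br))) by (field; lra).
    lra.
Qed.

Lemma tr_split n A A' B c w :
  (forall i j, (i < n)%nat -> (j < n)%nat -> A i j = Cadd (A' i j) (Cmul c (Cmul (w i) (Cconj (w j))))) ->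
  mtrace n (mmul n A B) = Cadd (mtrace n (mmul n A' B)) (Cmul c (bil n B w w)).
Proof.
  intros H. unfold mtrace, mmul, bil. rewrite (csum_swap n n (fun i j => Cmul (Cmul (Cconj (w i)) (B i j)) (w j))).
  rewrite csum_mull, <- csum_add. apply csum_ext; intros i Hi.
  rewrite csum_mull, <- csum_add. apply csum_ext; intros j Hj.
  rewrite H by auto. Cring.
Qed.

Lemma tr_pos_aux n B : PSD n B -> forall d m A, (m + d = n)%nat -> PSD n A ->
  (forall i j, (i < n)%nat -> (j < n)%nat -> (i < m \/ j < m)%nat -> A i j = C0) ->
  0 <= Re (mtrace n (mmul n A B)).
Proof.
  intros HB d. induction d; intros m A Hmd HA H0.
  - unfold mtrace, mmul. rewrite csum_zero. simpl; lra.
    intros. apply csum_zero. intros. rewrite H0 by lia. Cring.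
  - assert (Hm : (m < n)%nat) by lia.
    destruct (PSD_diag n A m HA Hm) as [Hre Him].
    destruct (Rle_lt_or_eq_dec _ _ Hre) as [Hpos | Hz].
    + rewrite (tr_split n A (Aschur A m (Re (A m m))) B (RtoC (/ Re (A m m))) (fun i => A i m)).
      * pose proof (IHd (S m) (Aschur A m (Re (A m m)))) as IH.
        assert (0 <= Re (bil n B (fun i => A i m) (fun i => A i m))) by (apply PSD_bil; auto).
        assert (0 <= Re (mtrace n (mmul n (Aschur A m (Re (A m m))) B))).
        { apply IH. lia. apply Aschur_PSD; auto.
          intros i j Hi Hj Hij. destruct HA as [HH _]. unfold Aschur.
          destruct (Nat.eq_dec i m); destruct (Nat.eq_dec j m); subst.
          - assert (A m m = mkC (Re (A m m)) 0) by (apply C_ext; simpl; auto).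
            rewrite H1. Csimpl. apply C_ext; simpl; field; lra.
          - rewrite (HH m j) by auto. assert (A m m = mkC (Re (A m m)) 0) by (apply C_ext; simpl; auto).
            rewrite H1. Csimpl. apply C_ext; simpl; field; lra.
          - rewrite (HH i m) by auto. assert (A m m = mkC (Re (A m m)) 0) by (apply C_ext; simpl; auto).
            rewrite H1. Csimpl. apply C_ext; simpl; field; lra.
          - destruct Hij as [Hij|Hij]; [rewrite (H0 i j), (H0 i m) by (auto; lia) | rewrite (H0 i j), (H0 j m) by (auto; lia)]; Cring. }
        Csimpl. assert (0 <= / Re (A m m)) by (apply Rlt_le, Rinv_0_lt_compat; auto). nra.
      * intros. unfold Aschur. Cring.
    + assert (Amm : A m m = C0) by (apply C_ext; Csimpl; lra).
      apply (IHd (S m)); auto. lia.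
      intros i j Hi Hj Hij. destruct (Nat.eq_dec i m) as [->|]; destruct (Nat.eq_dec j m) as [->|].
      * auto.
      * apply (PSD_row0 n); auto.
      * pose proof HA as [HH _]. rewrite HH by auto. rewrite (PSD_row0 n A m) by auto. Cring.
      * apply H0; auto; lia.
Qed.

Lemma tr_pos n A B : PSD n A -> PSD n B -> 0 <= Re (mtrace n (mmul n A B)).
Proof. intros. apply (tr_pos_aux n B H0 n 0 A); auto. intros; lia. Qed.

Lemma tens_blk din k T X i j a b : (a < k)%nat -> (b < k)%nat ->
  tens_id din k T X (i * k + a)%nat (j * k + b)%nat =
  apply din T (fun i' j' => X (i' * k + a)%nat (j' * k + b)%nat) i j.
Proof. intros. unfold tens_id. rewrite !divmod_l, !divmod_r by auto. reflexivity. Qed.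

Lemma bil_ext n A A' v v' w w' :
  (forall i j, (i < n)%nat -> (j < n)%nat -> A i j = A' i j) ->
  (forall i, (i < n)%nat -> v i = v' i) -> (forall i, (i < n)%nat -> w i = w' i) ->
  bil n A v w = bil n A' v' w'.
Proof.
  intros. unfold bil. apply csum_ext; intros. apply csum_ext; intros.
  rewrite H, H0, H1 by auto. reflexivity.
Qed.

Lemma bil_block d k A v w :
  bil (d * k) A v w = csum k (fun a => csum k (fun b =>
    bil d (fun i j => A (i * k + a)%nat (j * k + b)%nat)
      (fun i => v (i * k + a)%nat) (fun j => w (j * k + b)%nat))).
Proof.
  unfold bil. rewrite csum_block.
  transitivity (csum d (fun i => csum k (fun a => csum d (fun j => csum k (fun b =>
     Cmul (Cmul (Cconj (v (i * k + a)%nat)) (A (i * k + a)%nat (j * k + b)%nat)) (w (j * k + b)%nat)))))).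
  { apply csum_ext; intros. apply csum_ext; intros. apply csum_block. }
  rewrite csum_swap. apply csum_ext; intros a Ha.
  transitivity (csum d (fun i => csum k (fun b => csum d (fun j =>
     Cmul (Cmul (Cconj (v (i * k + a)%nat)) (A (i * k + a)%nat (j * k + b)%nat)) (w (j * k + b)%nat))))).
  { apply csum_ext; intros. apply csum_swap. }
  apply csum_swap.
Qed.

Lemma bil_csum n r F v w :
  bil n (fun i j => csum r (fun t => F t i j)) v w = csum r (fun t => bil n (F t) v w).
Proof.
  unfold bil. symmetry. rewrite csum_swap. apply csum_ext; intros.
  rewrite csum_swap. apply csum_ext; intros.
  rewrite csum_mull, csum_mulr. apply csum_ext; intros. Cring.
Qed.

Definition Kd (n : nat) (K : Mat) (v : nat -> C) : nat -> C :=
  fun k => csum n (fun j => Cmul (Cconj (K j k)) (v j)).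

Lemma bil_conj n m K X v w :
  bil n (fun i j => csum m (fun k => csum m (fun l =>
        Cmul (Cmul (K i k) (X k l)) (Cconj (K j l))))) v w =
  bil m X (Kd n K v) (Kd n K w).
Proof.
  unfold bil, Kd.
  symmetry.
  transitivity (csum m (fun k => csum m (fun l => csum n (fun i => csum n (fun j =>
     Cmul (Cmul (Cconj (v i)) (Cmul (Cmul (K i k) (X k l)) (Cconj (K j l)))) (w j)))))).
  { apply csum_ext; intros k Hk. apply csum_ext; intros l Hl.
    rewrite csum_conj, csum_mulr, csum_mulr. apply csum_ext; intros i Hi.
    rewrite csum_mull. apply csum_ext; intros j Hj. Cring. }
  rewrite csum_swap.
  transitivity (csum m (fun l => csum n (fun i => csum m (fun k => csum n (fun j =>
     Cmul (Cmul (Cconj (v i)) (Cmul (Cmul (K i k) (X k l)) (Cconj (K j l)))) (w j)))))).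
  { apply csum_ext; intros. apply csum_swap. }
  rewrite csum_swap. apply csum_ext; intros i Hi.
  transitivity (csum m (fun l => csum n (fun j => csum m (fun k =>
     Cmul (Cmul (Cconj (v i)) (Cmul (Cmul (K i k) (X k l)) (Cconj (K j l)))) (w j))))).
  { apply csum_ext; intros. apply csum_swap. }
  rewrite csum_swap. apply csum_ext; intros j Hj.
  symmetry. rewrite csum_mull, csum_mulr. rewrite csum_swap. apply csum_ext; intros k Hk.
  rewrite csum_mull, csum_mulr. apply csum_ext; intros l Hl. Cring.
Qed.

Definition kraus_form (din dout : nat) (T : LMap) (r : nat) (K : nat -> Mat) : Prop :=
  forall i j k l, (i < dout)%nat -> (j < dout)%nat -> (k < din)%nat -> (l < din)%nat ->
    T i j k l = csum r (fun t => Cmul (K t i k) (Cconj (K t j l))).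

Lemma div_lt_ d k p : (p < d * k)%nat -> (p / k < d)%nat.
Proof. intros. apply Nat.Div0.div_lt_upper_bound. lia. Qed.
Lemma mod_lt_ d k p : (p < d * k)%nat -> (p mod k < k)%nat.
Proof. intros. apply Nat.mod_upper_bound. intro; subst; lia. Qed.

Lemma kraus_CP din dout T r K : kraus_form din dout T r K -> CP din dout T.
Proof.
  intros HK kk X [HX QX]. split.
  - intros p q Hp Hq. unfold tens_id, apply.
    pose proof (div_lt_ _ _ _ Hp). pose proof (div_lt_ _ _ _ Hq).
    pose proof (mod_lt_ _ _ _ Hp). pose proof (mod_lt_ _ _ _ Hq).
    rewrite csum_conj, csum_swap. apply csum_ext; intros k Hk.
    rewrite csum_conj. apply csum_ext; intros l Hl.
    rewrite (HK (p / kk)%nat), (HK (q / kk)%nat) by auto.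
    rewrite (HX (l * kk + p mod kk)%nat) by (apply idx_lt; auto).
    assert (E : csum r (fun t => Cmul (K t (p / kk)%nat l) (Cconj (K t (q / kk)%nat k))) =
      Cconj (csum r (fun t => Cmul (K t (q / kk)%nat k) (Cconj (K t (p / kk)%nat l))))).
    { rewrite csum_conj. apply csum_ext; intros. Cring. }
    rewrite E. Cring.
  - intros v. fold (bil (dout * kk) (tens_id din kk T X) v v).
    assert (E : bil (dout * kk) (tens_id din kk T X) v v =
      csum r (fun t => bil (din * kk) X
        (fun s => csum dout (fun j => Cmul (Cconj (K t j (s / kk)%nat)) (v (j * kk + s mod kk)%nat)))
        (fun s => csum dout (fun j => Cmul (Cconj (K t j (s / kk)%nat)) (v (j * kk + s mod kk)%nat))))).
    { rewrite bil_block.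
      transitivity (csum kk (fun a => csum kk (fun b => csum r (fun t =>
        bil din (fun i j => X (i * kk + a)%nat (j * kk + b)%nat)
          (Kd dout (K t) (fun i => v (i * kk + a)%nat)) (Kd dout (K t) (fun j => v (j * kk + b)%nat)))))).
      { apply csum_ext; intros a Ha. apply csum_ext; intros b Hb.
        transitivity (bil dout (fun i j => csum r (fun t => csum din (fun k => csum din (fun l =>
              Cmul (Cmul (K t i k) (X (k * kk + a)%nat (l * kk + b)%nat)) (Cconj (K t j l))))))
            (fun i => v (i * kk + a)%nat) (fun j => v (j * kk + b)%nat)).
        { apply bil_ext; try (intros; reflexivity).
          intros i j Hi Hj. rewrite tens_blk by auto. unfold apply.
            symmetry. rewrite csum_swap. apply csum_ext; intros k Hk. rewrite csum_swap.
              apply csum_ext; intros l Hl. rewrite HK by auto. rewrite csum_mulr.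
              apply csum_ext; intros. Cring. }
        rewrite bil_csum. apply csum_ext; intros t Ht. apply bil_conj. }
      etransitivity. { apply csum_ext; intros a Ha. apply csum_swap. }
      rewrite csum_swap. apply csum_ext; intros t Ht.
      rewrite bil_block. apply csum_ext; intros a Ha.
      apply csum_ext; intros b Hb.
      apply bil_ext.
      - intros; reflexivity.
      - intros k Hk. unfold Kd. rewrite divmod_l, divmod_r by auto. reflexivity.
      - intros k Hk. unfold Kd. rewrite divmod_l, divmod_r by auto. reflexivity. }
    rewrite E, Re_csum. apply rsum_nonneg; intros. apply QX.
Qed.

Lemma TP_tens din dout T kk X : TP din dout T ->
  mtrace (dout * kk) (tens_id din kk T X) = mtrace (din * kk) X.
Proof.
  intros HT. unfold mtrace. rewrite !csum_block, (csum_swap dout), (csum_swap din).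
  apply csum_ext; intros a Ha.
  transitivity (mtrace dout (apply din T (fun i' j' => X (i' * kk + a)%nat (j' * kk + a)%nat))).
  { unfold mtrace. apply csum_ext; intros. rewrite tens_blk by auto. reflexivity. }
  rewrite HT. reflexivity.
Qed.

Definition jr (p d : R) : R := if Req_dec_T p 0 then 0 else d * d / p.

Lemma jr_nonneg p d : 0 <= p -> 0 <= jr p d.
Proof.
  intros. unfold jr. destruct (Req_dec_T p 0). lra.
  apply Rmult_le_pos. nra. apply Rlt_le, Rinv_0_lt_compat; lra.
Qed.

Lemma Jfun_fin n p d : (forall y, (y < n)%nat -> p y = 0 -> d y = 0) ->
  Jfun n p d = Fin (rsum n (fun y => jr (p y) (d y))).
Proof.
  induction n; intros; simpl; auto.
  rewrite IHn by auto. unfold Jterm, jr.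
  destruct (Req_dec_T (p n) 0).
  - rewrite H by (auto; lia). destruct (Req_dec_T 0 0); [|lra]. simpl. f_equal; lra.
  - simpl. reflexivity.
Qed.

Lemma Jfun_inv n p d x : Jfun n p d = Fin x ->
  forall y, (y < n)%nat -> p y = 0 -> d y = 0.
Proof.
  revert x. induction n; simpl; intros. lia.
  destruct (Jfun n p d) eqn:E; [|discriminate].
  unfold Jterm in H. destruct (Req_dec_T (p n) 0).
  - destruct (Req_dec_T (d n) 0); [|discriminate].
    destruct (Nat.eq_dec y n); [subst; auto|]. apply (IHn r); auto. lia.
  - destruct (Nat.eq_dec y n); [subst; lra|]. apply (IHn r); auto. lia.
Qed.

Lemma rsum_nonneg_zero n f : (forall i, (i < n)%nat -> 0 <= f i) -> rsum n f = 0 ->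
  forall i, (i < n)%nat -> f i = 0.
Proof.
  induction n; simpl; intros. lia.
  assert (0 <= rsum n f) by (apply rsum_nonneg; intros; apply H; lia).
  assert (0 <= f n) by (apply H; lia).
  destruct (Nat.eq_dec i n). subst; lra. apply IHn. intros; apply H; lia. lra. lia.
Qed.

Lemma rsum_lin n c1 c2 f g : rsum n (fun y => c1 * f y - c2 * g y) = c1 * rsum n f - c2 * rsum n g.
Proof. induction n; simpl. ring. rewrite IHn; ring. Qed.

Lemma cs_core n (b a : nat -> R) : (forall y, (y < n)%nat -> 0 <= b y) ->
  (forall y, (y < n)%nat -> b y = 0 -> a y = 0) ->
  jr (rsum n b) (rsum n a) <= rsum n (fun y => jr (b y) (a y)).
Proof.
  intros Hb Hab.
  assert (HB : 0 <= rsum n b) by (apply rsum_nonneg; auto).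
  assert (Hj : 0 <= rsum n (fun y => jr (b y) (a y))) by (apply rsum_nonneg; intros; apply jr_nonneg; auto).
  unfold jr at 1. destruct (Req_dec_T (rsum n b) 0). auto.
  set (B := rsum n b) in *. set (A := rsum n a). set (t := A / B).
  assert (Ht : forall y, (y < n)%nat -> 2 * t * a y - t * t * b y <= jr (b y) (a y)).
  { intros y Hy. unfold jr. destruct (Req_dec_T (b y) 0).
    - rewrite e, Hab by auto. lra.
    - assert (0 < b y) by (specialize (Hb y Hy); lra).
      assert (a y * a y / b y - (2 * t * a y - t * t * b y) = (a y - t * b y) * (a y - t * b y) / b y)
        by (field; lra).
      assert (0 <= (a y - t * b y) * (a y - t * b y) / b y).
      { apply Rmult_le_pos. apply Rle_0_sqr. apply Rlt_le, Rinv_0_lt_compat; lra. }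
      lra. }
  pose proof (rsum_le n _ _ Ht).
  rewrite rsum_lin in H. fold A B in H.
  assert (A * A / B = 2 * t * A - t * t * B) by (unfold t; field; auto).
  lra.
Qed.

Lemma rsum_zero n f : (forall i, (i < n)%nat -> f i = 0) -> rsum n f = 0.
Proof. induction n; simpl; intros. auto. rewrite IHn, H by (auto; lia). ring. Qed.

Lemma jr_scale c q d : 0 <= c -> (q = 0 -> d = 0) -> jr (c * q) (c * d) = c * jr q d.
Proof.
  intros Hc Hqd. unfold jr.
  destruct (Req_dec_T (c * q) 0); destruct (Req_dec_T q 0).
  - ring.
  - destruct (Rmult_integral _ _ e). subst; ring. contradiction.
  - subst. rewrite Rmult_0_r in n. contradiction.
  - assert (c <> 0) by (intro; subst; apply n; ring). field. auto.
Qed.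

Lemma dpi n m (q d : nat -> R) (c : nat -> nat -> R) :
  (forall y, (y < n)%nat -> 0 <= q y) ->
  (forall y y', (y < n)%nat -> (y' < m)%nat -> 0 <= c y y') ->
  (forall y, (y < n)%nat -> rsum m (fun y' => c y y') <= 1) ->
  ERle (Jfun m (fun y' => rsum n (fun y => q y * c y y')) (fun y' => rsum n (fun y => d y * c y y')))
       (Jfun n q d).
Proof.
  intros Hq Hc Hs.
  destruct (Jfun n q d) as [x|] eqn:E; [|destruct (Jfun m _ _); simpl; auto].
  pose proof (Jfun_inv n q d x E) as Hz.
  rewrite Jfun_fin in E by auto. injection E as <-.
  assert (Hprod : forall y y', (y < n)%nat -> (y' < m)%nat -> q y * c y y' = 0 -> d y * c y y' = 0).
  { intros. destruct (Rmult_integral _ _ H1). rewrite Hz; auto; lra. rewrite H2; lra. }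
  rewrite Jfun_fin.
  2:{ intros y' Hy' H0. apply rsum_zero. intros y Hy. apply Hprod; auto.
      apply (rsum_nonneg_zero n (fun y => q y * c y y')); auto.
      intros. apply Rmult_le_pos; auto. }
  simpl.
  apply Rle_trans with (rsum m (fun y' => rsum n (fun y => c y y' * jr (q y) (d y)))).
  { apply rsum_le; intros y' Hy'.
    eapply Rle_trans. apply cs_core.
    - intros. apply Rmult_le_pos; auto.
    - intros. apply Hprod; auto.
    - right. apply rsum_ext; intros y Hy. rewrite !(Rmult_comm _ (c y y')). apply jr_scale; auto. }
  rewrite rsum_swap. apply rsum_le; intros y Hy.
  rewrite <- (rsum_ext m (fun y' => jr (q y) (d y) * c y y')) by (intros; ring).
  rewrite rsum_scal. specialize (Hs y Hy). pose proof (jr_nonneg (q y) (d y) (Hq y Hy)).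
  rewrite <- (Rmult_1_r (jr (q y) (d y))) at 2. apply Rmult_le_compat_l; auto.
Qed.

Lemma Jfun_ext n p d p' d' : (forall y, (y < n)%nat -> p y = p' y) ->
  (forall y, (y < n)%nat -> d y = d' y) -> Jfun n p d = Jfun n p' d'.
Proof. induction n; simpl; intros; auto. rewrite IHn, H, H0 by (auto; lia). auto. Qed.

Lemma tr_lin n N (A : Mat) (As : nat -> Mat) (v : nat -> R) B :
  (forall r s, (r < n)%nat -> (s < n)%nat -> A r s = csum N (fun y => Cmul (RtoC (v y)) (As y r s))) ->
  Re (mtrace n (mmul n A B)) = rsum N (fun y => v y * Re (mtrace n (mmul n (As y) B))).
Proof.
  intros H.
  assert (E : mtrace n (mmul n A B) = csum N (fun y => Cmul (RtoC (v y)) (mtrace n (mmul n (As y) B)))).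
  { unfold mtrace, mmul. symmetry.
    transitivity (csum N (fun y => csum n (fun r => csum n (fun s => Cmul (Cmul (RtoC (v y)) (As y r s)) (B s r))))).
    { apply csum_ext; intros y Hy. rewrite csum_mull. apply csum_ext; intros r Hr.
      rewrite csum_mull. apply csum_ext; intros; Cring. }
    rewrite csum_swap. apply csum_ext; intros r Hr. rewrite csum_swap. apply csum_ext; intros s Hs.
    rewrite H by auto. rewrite csum_mulr. reflexivity. }
  rewrite E, Re_csum. apply rsum_ext; intros. Csimpl. ring.
Qed.

Lemma tens_lin din k N T (Ts : nat -> LMap) (v : nat -> R) X :
  (forall Y i j, (i < din)%nat -> (j < din)%nat ->
     apply din T Y i j = csum N (fun y => Cmul (RtoC (v y)) (apply din (Ts y) Y i j))) ->
  forall r s, (r < din * k)%nat -> (s < din * k)%nat ->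
  tens_id din k T X r s = csum N (fun y => Cmul (RtoC (v y)) (tens_id din k (Ts y) X r s)).
Proof. intros H r s Hr Hs. unfold tens_id. apply H; apply (div_lt_ _ _ _); auto. Qed.

Lemma povm_tr n m M A : (forall i j, (i < n)%nat -> (j < n)%nat ->
    csum m (fun y => M y i j) = (if Nat.eqb i j then C1 else C0)) ->
  csum m (fun y => mtrace n (mmul n A (M y))) = mtrace n A.
Proof.
  intros H. unfold mtrace, mmul. rewrite csum_swap. apply csum_ext; intros r Hr.
  rewrite csum_swap.
  rewrite (csum_single n r); auto.
  - rewrite <- csum_mull, H, Nat.eqb_refl by auto. Cring.
  - intros s Hs Hsr. rewrite <- csum_mull, H by auto.
    destruct (Nat.eqb_spec s r); [lia|]. Cring.
Qed.

Lemma rank1_PSD n c u : 0 <= c ->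
  PSD n (fun r s => Cmul (RtoC c) (Cmul (u r) (Cconj (u s)))).
Proof.
  intros Hc. split.
  - intros i j _ _. Cring.
  - intros v. fold (bil n (fun r s => Cmul (RtoC c) (Cmul (u r) (Cconj (u s)))) v v).
    assert (E : bil n (fun r s => Cmul (RtoC c) (Cmul (u r) (Cconj (u s)))) v v =
      Cmul (RtoC c) (Cmul (csum n (fun i => Cmul (Cconj (v i)) (u i))) (Cconj (csum n (fun i => Cmul (Cconj (v i)) (u i)))))).
    { rewrite csum_conj, csum_prod, csum_mull. unfold bil. apply csum_ext; intros.
      rewrite csum_mull. apply csum_ext; intros. Cring. }
    rewrite E. destruct (csum n _) as [x y]. Csimpl. nra.
Qed.

Lemma PSD_ext n A B : (forall i j, (i < n)%nat -> (j < n)%nat -> A i j = B i j) -> PSD n A -> PSD n B.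
Proof.
  intros H [HH HQ]. split.
  - intros i j Hi Hj. rewrite <- !H by auto. auto.
  - intros v. fold (bil n B v v). rewrite (bil_ext n B A v v v v).
    + apply HQ.
    + intros; symmetry; auto.
    + auto.
    + auto.
Qed.

Definition unitr (y : nat) : nat -> R := fun z => if Nat.eqb z y then 1 else 0.
Definition Tsl (n : nat) (L : LMap) (y : nat) : LMap :=
  fun i j k l => L i j (k * n + y)%nat (l * n + y)%nat.

Lemma ten_diag_blk n X v k l y1 y2 : (y1 < n)%nat -> (y2 < n)%nat ->
  ten_diag n X v (k * n + y1)%nat (l * n + y2)%nat =
  if Nat.eqb y1 y2 then Cmul (X k l) (RtoC (v y1)) else C0.
Proof. intros. unfold ten_diag. rewrite !divmod_l, !divmod_r by auto. reflexivity. Qed.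

Lemma apply_ten_diag n L X v i j :
  apply (2 * n) L (ten_diag n X v) i j = csum n (fun y => Cmul (RtoC (v y)) (apply 2 (Tsl n L y) X i j)).
Proof.
  unfold apply. rewrite csum_block.
  transitivity (csum 2 (fun k => csum n (fun y1 => csum 2 (fun l =>
      Cmul (L i j (k * n + y1)%nat (l * n + y1)%nat) (Cmul (X k l) (RtoC (v y1))))))).
  { apply csum_ext; intros k Hk. apply csum_ext; intros y1 Hy1.
    rewrite csum_block. apply csum_ext; intros l Hl.
    rewrite (csum_single n y1); auto.
    - rewrite ten_diag_blk, Nat.eqb_refl by auto. reflexivity.
    - intros y2 Hy2 Hne. rewrite ten_diag_blk by auto.
      destruct (Nat.eqb_spec y1 y2); [lia|]. Cring. }
  rewrite csum_swap. apply csum_ext; intros y Hy.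
  unfold Tsl. rewrite csum_mull. apply csum_ext; intros k Hk.
  rewrite csum_mull. apply csum_ext; intros l Hl. Cring.
Qed.

Lemma tr_ten_diag n X y : (y < n)%nat -> mtrace (2 * n) (ten_diag n X (unitr y)) = mtrace 2 X.
Proof.
  intros Hy. unfold mtrace. rewrite csum_block. apply csum_ext; intros i Hi.
  rewrite (csum_single n y); auto.
  - rewrite ten_diag_blk, Nat.eqb_refl by auto. unfold unitr. rewrite Nat.eqb_refl. Cring.
  - intros. rewrite ten_diag_blk, Nat.eqb_refl by auto. unfold unitr.
    destruct (Nat.eqb_spec i0 y); [lia|]. Cring.
Qed.

Lemma Tsl_TP n L y : (y < n)%nat -> TP (2 * n) 2 L -> TP 2 2 (Tsl n L y).
Proof.
  intros Hy HL X. rewrite <- (tr_ten_diag n X y Hy), <- HL.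
  unfold mtrace. apply csum_ext; intros i Hi. rewrite apply_ten_diag.
  rewrite (csum_single n y); auto.
  - unfold unitr. rewrite Nat.eqb_refl. Cring.
  - intros. unfold unitr. destruct (Nat.eqb_spec i0 y); [lia|]. Cring.
Qed.

Definition Zy (n k y : nat) (rho : Mat) : Mat := fun p q =>
  ten_diag n (fun i j => rho (i * k + p mod k)%nat (j * k + q mod k)%nat) (unitr y) (p / k)%nat (q / k)%nat.

Lemma apply_ext d T X X' i j : (forall a b, (a < d)%nat -> (b < d)%nat -> X a b = X' a b) ->
  apply d T X i j = apply d T X' i j.
Proof. intros. unfold apply. apply csum_ext; intros. apply csum_ext; intros. rewrite H; auto. Qed.

Lemma Zy_tens n k y rho L r s : (y < n)%nat -> (r < 2 * k)%nat -> (s < 2 * k)%nat ->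
  tens_id 2 k (Tsl n L y) rho r s = tens_id (2 * n) k L (Zy n k y rho) r s.
Proof.
  intros Hy Hr Hs. pose proof (mod_lt_ _ _ _ Hr). pose proof (mod_lt_ _ _ _ Hs).
  unfold tens_id at 2.
  rewrite (apply_ext _ _ _ (ten_diag n (fun i j => rho (i * k + r mod k)%nat (j * k + s mod k)%nat) (unitr y))).
  2:{ intros. unfold Zy. rewrite !divmod_l, !divmod_r by auto. reflexivity. }
  rewrite apply_ten_diag. rewrite (csum_single n y); auto.
  - unfold unitr. rewrite Nat.eqb_refl. unfold tens_id. Cring.
  - intros. unfold unitr. destruct (Nat.eqb_spec i y); [lia|]. Cring.
Qed.

Lemma bil_zero n A v w : (forall i j, (i < n)%nat -> (j < n)%nat -> A i j = C0) -> bil n A v w = C0.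
Proof. intros. unfold bil. apply csum_zero; intros. apply csum_zero; intros. rewrite H by auto. Cring. Qed.

Lemma Zy_PSD n k y rho : (y < n)%nat -> PSD (2 * k) rho -> PSD (2 * n * k) (Zy n k y rho).
Proof.
  intros Hy [HH HQ]. split.
  - intros p q Hp Hq.
    pose proof (div_lt_ _ _ _ Hp) as Hp1. pose proof (div_lt_ _ _ _ Hq) as Hq1.
    pose proof (div_lt_ _ _ _ Hp1) as Hp2. pose proof (div_lt_ _ _ _ Hq1) as Hq2.
    pose proof (mod_lt_ _ _ _ Hp) as Hp3. pose proof (mod_lt_ _ _ _ Hq) as Hq3.
    unfold Zy, ten_diag.
    destruct (Nat.eqb_spec ((p / k) mod n) ((q / k) mod n)) as [E|E].
    + rewrite E, Nat.eqb_refl. rewrite HH by (apply idx_lt; auto). Cring.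
    + destruct (Nat.eqb_spec ((q / k) mod n) ((p / k) mod n)); [lia|]. Cring.
  - intros v. fold (bil (2 * n * k) (Zy n k y rho) v v).
    set (u := fun p => v (((p / k) * n + y) * k + p mod k)%nat).
    assert (E : bil (2 * n * k) (Zy n k y rho) v v = bil (2 * k) rho u u).
    { rewrite !bil_block. apply csum_ext; intros a Ha. apply csum_ext; intros b Hb.
      rewrite (bil_ext (2 * n) _ (ten_diag n (fun i j => rho (i * k + a)%nat (j * k + b)%nat) (unitr y))
                 _ (fun i => v (i * k + a)%nat) _ (fun j => v (j * k + b)%nat)).
      2:{ intros. unfold Zy. rewrite !divmod_l, !divmod_r by auto. reflexivity. }
      2,3: intros; reflexivity.
      rewrite bil_block. rewrite (csum_single n y); auto.
      - rewrite (csum_single n y); auto.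
        + apply bil_ext.
          * intros. rewrite ten_diag_blk, Nat.eqb_refl by auto. unfold unitr. rewrite Nat.eqb_refl. Cring.
          * intros. unfold u. rewrite divmod_l, divmod_r by auto. reflexivity.
          * intros. unfold u. rewrite divmod_l, divmod_r by auto. reflexivity.
        + intros. apply bil_zero. intros. rewrite ten_diag_blk by auto.
          unfold unitr. destruct (Nat.eqb_spec y i); [lia|]. destruct (Nat.eqb_spec i y); [lia|]. Cring.
      - intros. apply csum_zero; intros. apply bil_zero. intros. rewrite ten_diag_blk by auto.
        unfold unitr. destruct (Nat.eqb_spec i i0). subst. destruct (Nat.eqb_spec i0 y); [lia|]. Cring.
        Cring. }
    rewrite E. apply HQ.
Qed.

Definition pc1 (y : nat) : LMap := fun i j k l => Cmul (pauli y i k) (pauli y l j).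

Lemma lt2 i : (i < 2)%nat -> i = 0%nat \/ i = 1%nat.
Proof. lia. Qed.
Lemma lt4 i : (i < 4)%nat -> i = 0%nat \/ i = 1%nat \/ i = 2%nat \/ i = 3%nat.
Proof. lia. Qed.

Lemma pauli_herm y j l : (y < 4)%nat -> (j < 2)%nat -> (l < 2)%nat -> pauli y l j = Cconj (pauli y j l).
Proof.
  intros Hy Hj Hl. destruct (lt4 y Hy) as [ -> | [ -> | [ -> | -> ] ] ];
  destruct (lt2 j Hj) as [ -> | -> ]; destruct (lt2 l Hl) as [ -> | -> ]; simpl; Cring.
Qed.

Lemma pc1_kraus y : (y < 4)%nat -> kraus_form 2 2 (pc1 y) 1 (fun _ => pauli y).
Proof. intros Hy i j k l Hi Hj Hk Hl. unfold pc1. simpl. rewrite (pauli_herm y j l) by auto. Cring. Qed.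

Lemma pc1_TP y : (y < 4)%nat -> TP 2 2 (pc1 y).
Proof.
  intros Hy X. destruct (lt4 y Hy) as [ -> | [ -> | [ -> | -> ] ] ]; unfold mtrace, apply, pc1; simpl; Cring.
Qed.

Lemma pauli_lin q X i j :
  apply 2 (pauli_chan q) X i j = csum 4 (fun y => Cmul (RtoC (q y)) (apply 2 (pc1 y) X i j)).
Proof.
  unfold apply. symmetry.
  transitivity (csum 4 (fun y => csum 2 (fun k => csum 2 (fun l =>
     Cmul (Cmul (Cmul (RtoC (q y)) (pauli y i k)) (pauli y l j)) (X k l))))).
  { apply csum_ext; intros y Hy. rewrite csum_mull. apply csum_ext; intros k Hk.
    rewrite csum_mull. apply csum_ext; intros l Hl. unfold pc1. Cring. }
  rewrite csum_swap. apply csum_ext; intros k Hk. rewrite csum_swap. apply csum_ext; intros l Hl.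
  unfold pauli_chan. rewrite csum_mulr. reflexivity.
Qed.

Definition bellv (y r : nat) : C := pauli y (r / 2)%nat (r mod 2)%nat.
Definition Mb (y : nat) : Mat := fun r s => Cmul (RtoC (/ 2)) (Cmul (bellv y r) (Cconj (bellv y s))).
Definition rhob : Mat := Mb 0.

Lemma Mb_PSD y : PSD 4 (Mb y).
Proof. apply rank1_PSD. lra. Qed.

Lemma rhob_state : state 4 rhob.
Proof.
  split. apply Mb_PSD. unfold rhob, Mb, mtrace, bellv. simpl. apply C_ext; Csimpl; field.
Qed.

Lemma Mb_POVM : POVM 4 4 Mb.
Proof.
  split. intros; apply Mb_PSD.
  intros i j Hi Hj.
  assert (H4 : forall i, (i < 4)%nat -> i = 0%nat \/ i = 1%nat \/ i = 2%nat \/ i = 3%nat) by (intros; lia).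
  destruct (H4 i Hi) as [ -> | [ -> | [ -> | -> ] ] ]; destruct (H4 j Hj) as [ -> | [ -> | [ -> | -> ] ] ];
  unfold Mb, bellv; simpl; apply C_ext; Csimpl; field.
Qed.

Lemma bell_val q y' : (y' < 4)%nat ->
  Re (mtrace 4 (mmul 4 (tens_id 2 2 (pauli_chan q) rhob) (Mb y'))) = q y'.
Proof.
  intros Hy. destruct (lt4 y' Hy) as [ -> | [ -> | [ -> | -> ] ] ];
  unfold mtrace, mmul, tens_id, apply, pauli_chan, rhob, Mb, bellv; simpl; field.
Qed.

Definition KL (t : nat) : Mat := fun i k => if Nat.eqb (k mod 4) t then pauli t i (k / 4)%nat else C0.
Definition Lsim : LMap := fun i j k l => csum 4 (fun t => Cmul (KL t i k) (Cconj (KL t j l))).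

Lemma Lsim_CP : CP (2 * 4) 2 Lsim.
Proof. apply (kraus_CP _ _ _ 4 KL). intros i j k l _ _ _ _. reflexivity. Qed.

Lemma lt8 k : (k < 8)%nat -> k = 0%nat \/ k = 1%nat \/ k = 2%nat \/ k = 3%nat \/ k = 4%nat \/ k = 5%nat \/ k = 6%nat \/ k = 7%nat.
Proof. lia. Qed.

Lemma Lcoef k l : (k < 8)%nat -> (l < 8)%nat ->
  csum 2 (fun i => Lsim i i k l) = if Nat.eqb k l then C1 else C0.
Proof.
  intros Hk Hl.
  destruct (lt8 k Hk) as [ -> | [ -> | [ -> | [ -> | [ -> | [ -> | [ -> | -> ] ] ] ] ] ] ];
  destruct (lt8 l Hl) as [ -> | [ -> | [ -> | [ -> | [ -> | [ -> | [ -> | -> ] ] ] ] ] ] ];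
  unfold Lsim, KL; simpl; Cring.
Qed.

Lemma Lsim_TP : TP (2 * 4) 2 Lsim.
Proof.
  intros X. unfold mtrace, apply.
  transitivity (csum (2 * 4) (fun k => csum (2 * 4) (fun l => Cmul (csum 2 (fun i => Lsim i i k l)) (X k l)))).
  { rewrite csum_swap. apply csum_ext; intros k Hk. rewrite csum_swap. apply csum_ext; intros l Hl.
    rewrite csum_mulr. reflexivity. }
  apply csum_ext; intros k Hk. rewrite (csum_single _ k); auto.
  - rewrite Lcoef, Nat.eqb_refl by auto. Cring.
  - intros. rewrite Lcoef by auto. destruct (Nat.eqb_spec k i); [lia|]. Cring.
Qed.

Lemma Tsl_Lsim y X i j : (y < 4)%nat -> (i < 2)%nat -> (j < 2)%nat ->
  apply 2 (Tsl 4 Lsim y) X i j = apply 2 (pc1 y) X i j.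
Proof.
  intros Hy Hi Hj. unfold apply. apply csum_ext; intros k Hk. apply csum_ext; intros l Hl.
  f_equal. unfold Tsl, Lsim, pc1.
  rewrite (csum_single 4 y); auto.
  - unfold KL. rewrite !divmod_l, !divmod_r, Nat.eqb_refl by lia.
    rewrite (pauli_herm y j l) by auto. Cring.
  - intros t Ht Hne. unfold KL. rewrite !divmod_r by lia. destruct (Nat.eqb_spec y t); [lia|]. Cring.
Qed.

Lemma sim_eq q X i j : (i < 2)%nat -> (j < 2)%nat ->
  apply 2 (pauli_chan q) X i j = apply (2 * 4) Lsim (ten_diag 4 X q) i j.
Proof.
  intros Hi Hj. rewrite apply_ten_diag, pauli_lin. apply csum_ext; intros y Hy.
  rewrite Tsl_Lsim by auto. reflexivity.
Qed.

Lemma deriv_rsum n (g : R -> nat -> R) (dl c : nat -> R) th :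
  (forall y, (y < n)%nat -> derivable_pt_lim (fun t => g t y) th (dl y)) ->
  derivable_pt_lim (fun t => rsum n (fun y => g t y * c y)) th (rsum n (fun y => dl y * c y)).
Proof.
  induction n; simpl; intros H.
  - exact (derivable_pt_lim_const 0 th).
  - change (fun t => rsum n (fun y => g t y * c y) + g t n * c n) with
      (plus_fct (fun t => rsum n (fun y => g t y * c y)) (fun t => g t n * c n)).
    apply derivable_pt_lim_plus. apply IHn; intros; apply H; lia.
    replace (fun t => g t n * c n) with (mult_real_fct (c n) (fun t => g t n)).
    replace (dl n * c n) with (c n * dl n) by ring.
    apply derivable_pt_lim_scal. apply H; lia.
    apply functional_extensionality; intros. unfold mult_real_fct. ring.
Qed.

Lemma Re_pauli q X i j : Re (apply 2 (pauli_chan q) X i j) = rsum 4 (fun y => q y * Re (apply 2 (pc1 y) X i j)).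
Proof. rewrite pauli_lin, Re_csum. apply rsum_ext; intros. Csimpl. ring. Qed.
Lemma Im_pauli q X i j : Im (apply 2 (pauli_chan q) X i j) = rsum 4 (fun y => q y * Im (apply 2 (pc1 y) X i j)).
Proof. rewrite pauli_lin, Im_csum. apply rsum_ext; intros. Csimpl. ring. Qed.

Lemma tr_ext n A A' B : (forall r s, (r < n)%nat -> (s < n)%nat -> A r s = A' r s) ->
  mtrace n (mmul n A B) = mtrace n (mmul n A' B).
Proof. intros. unfold mtrace, mmul. apply csum_ext; intros. apply csum_ext; intros. rewrite H; auto. Qed.

Theorem mainTheorem4 (px py pz : R -> R) (a b theta : R)
  (delta : nat -> R) (Delta : LMap) :
  a < theta < b ->
  (forall t, a < t < b ->
     0 <= px t /\ 0 <= py t /\ 0 <= pz t /\ px t + py t + pz t <= 1) ->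
  (forall t, a < t < b ->
     (exists l, derivable_pt_lim px t l) /\ (exists l, derivable_pt_lim py t l) /\
     (exists l, derivable_pt_lim pz t l)) ->
  (* delta = d q_theta / d theta *)
  (forall y, (y < 4)%nat ->
     derivable_pt_lim (fun t => qvec (px t) (py t) (pz t) y) theta (delta y)) ->
  (* Delta = d Lambda_theta / d theta *)
  (forall (X : Mat) (i j : nat), (i < 2)%nat -> (j < 2)%nat ->
     derivable_pt_lim
       (fun t => Re (apply 2 (pauli_chan (qvec (px t) (py t) (pz t))) X i j))
       theta (Re (apply 2 Delta X i j)) /\
     derivable_pt_lim
       (fun t => Im (apply 2 (pauli_chan (qvec (px t) (py t) (pz t))) X i j))
       theta (Im (apply 2 Delta X i j))) ->
  let q := qvec (px theta) (py theta) (pz theta) in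
  Gmin_is 2 2 (pauli_chan q) Delta (Jfun 4 q delta) /\
  Gmax_is 2 2 (pauli_chan q) Delta (Jfun 4 q delta).
Proof.
  intros Hab Hp _ Hdq HDelta q.
  assert (HQ0 : forall y, (y < 4)%nat -> 0 <= q y).
  { intros y Hy. destruct (Hp theta Hab) as [H1 [H2 [H3 H4]]].
    destruct (lt4 y Hy) as [ -> | [ -> | [ -> | -> ] ] ]; unfold q, qvec; lra. }
  assert (HQ1 : rsum 4 q = 1) by (unfold q, qvec; simpl; ring).
  assert (HD0 : rsum 4 delta = 0).
  { pose proof (deriv_rsum 4 (fun t y => qvec (px t) (py t) (pz t) y) delta (fun _ => 1) theta Hdq) as H.
    cbv beta in H. replace (fun t => rsum 4 (fun y => qvec (px t) (py t) (pz t) y * 1)) with (fct_cte 1) in H.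
    2:{ apply functional_extensionality; intros. unfold fct_cte, qvec. simpl. ring. }
    pose proof (uniqueness_limite _ _ _ _ H (derivable_pt_lim_const 1 theta)).
    rewrite <- H0. simpl. ring. }
  assert (HDel : forall X i j, (i < 2)%nat -> (j < 2)%nat ->
            apply 2 Delta X i j = apply 2 (pauli_chan delta) X i j).
  { intros X i j Hi Hj. destruct (HDelta X i j Hi Hj) as [HR HI]. apply C_ext.
    - pose proof (deriv_rsum 4 (fun t y => qvec (px t) (py t) (pz t) y) delta
                    (fun y => Re (apply 2 (pc1 y) X i j)) theta Hdq) as H.
      replace (fun t => Re (apply 2 (pauli_chan (qvec (px t) (py t) (pz t))) X i j)) with
        (fun t => rsum 4 (fun y => qvec (px t) (py t) (pz t) y * Re (apply 2 (pc1 y) X i j))) in HR.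
      2:{ apply functional_extensionality; intros. rewrite Re_pauli. reflexivity. }
      rewrite (uniqueness_limite _ _ _ _ HR H), Re_pauli. reflexivity.
    - pose proof (deriv_rsum 4 (fun t y => qvec (px t) (py t) (pz t) y) delta
                    (fun y => Im (apply 2 (pc1 y) X i j)) theta Hdq) as H.
      replace (fun t => Im (apply 2 (pauli_chan (qvec (px t) (py t) (pz t))) X i j)) with
        (fun t => rsum 4 (fun y => qvec (px t) (py t) (pz t) y * Im (apply 2 (pc1 y) X i j))) in HI.
      2:{ apply functional_extensionality; intros. rewrite Im_pauli. reflexivity. }
      rewrite (uniqueness_limite _ _ _ _ HI H), Im_pauli. reflexivity. }
  assert (HDlin : forall Y i j, (i < 2)%nat -> (j < 2)%nat ->
     apply 2 Delta Y i j = csum 4 (fun y => Cmul (RtoC (delta y)) (apply 2 (pc1 y) Y i j))).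
  { intros. rewrite HDel by auto. apply pauli_lin. }
  assert (Hbd : forall y', (y' < 4)%nat ->
     Re (mtrace 4 (mmul 4 (tens_id 2 2 Delta rhob) (Mb y'))) = delta y').
  { intros. rewrite <- (bell_val delta y') by auto. f_equal. apply tr_ext; intros.
    unfold tens_id. apply HDel; apply (div_lt_ 2 2); auto. }
  split; split.
  -
    intros x [k [rho [m [M [Hst [HP ->]]]]]].
    set (c := fun y y' => Re (mtrace (2 * k) (mmul (2 * k) (tens_id 2 k (pc1 y) rho) (M y')))).
    rewrite (Jfun_ext m _ _ (fun y' => rsum 4 (fun y => q y * c y y')) (fun y' => rsum 4 (fun y => delta y * c y y'))).
    + apply dpi; auto.
      * intros y y' Hy Hy'. apply tr_pos. apply (kraus_CP _ _ _ _ _ (pc1_kraus y Hy)). apply Hst.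
        apply HP; auto.
      * intros y Hy. unfold c. rewrite <- Re_csum, povm_tr by apply HP.
        rewrite TP_tens by (apply pc1_TP; auto). destruct Hst as [_ ->]. simpl; lra.
    + intros y' Hy'. apply tr_lin. apply tens_lin. intros. apply pauli_lin.
    + intros y' Hy'. apply tr_lin. apply tens_lin. intros. apply HDlin; auto.
  -
    intros u Hu. apply Hu. exists 2%nat, rhob, 4%nat, Mb. split; [exact rhob_state|]. split; [exact Mb_POVM|].
    apply Jfun_ext; intros y' Hy'. rewrite bell_val; auto. rewrite Hbd; auto.
  -
    intros x [n [q' [d' [L [[Hpd [Hs0 [[HCP HTP] [Hm1 Hm2]]]] ->]]]]].
    set (c := fun y y' => Re (mtrace 4 (mmul 4 (tens_id 2 2 (Tsl n L y) rhob) (Mb y')))).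
    rewrite (Jfun_ext 4 q delta (fun y' => rsum n (fun y => q' y * c y y')) (fun y' => rsum n (fun y => d' y * c y y'))).
    + apply dpi.
      * apply Hpd.
      * intros y y' Hy Hy'. apply tr_pos; [|apply Mb_PSD].
        apply (PSD_ext (2 * 2) (tens_id (2 * n) 2 L (Zy n 2 y rhob))).
        { intros. symmetry. apply Zy_tens; auto. }
        apply HCP. apply Zy_PSD; auto. exact (proj1 rhob_state).
      * intros y Hy. unfold c. rewrite <- Re_csum, povm_tr by apply Mb_POVM.
        change 4%nat with (2 * 2)%nat at 1.
        rewrite TP_tens by (apply Tsl_TP; auto). assert (Hr1 : mtrace (2 * 2) rhob = C1) by exact (proj2 rhob_state). rewrite Hr1. simpl; lra.
    + intros y' Hy'. rewrite <- (bell_val q y') by auto. apply tr_lin. apply (tens_lin 2 2).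
      intros. rewrite (Hm1 Y i j) by auto. apply apply_ten_diag.
    + intros y' Hy'. rewrite <- Hbd by auto. apply tr_lin. apply (tens_lin 2 2).
      intros. rewrite (Hm2 Y i j) by auto. apply apply_ten_diag.
  -
    intros u Hu. apply Hu. exists 4%nat, q, delta, Lsim. split; [|reflexivity].
    split; [split; auto|]. split; auto. split; [split; [exact Lsim_CP | exact Lsim_TP]|].
    split.
    + intros X i j Hi Hj. apply sim_eq; auto.
    + intros X i j Hi Hj. rewrite HDel by auto. apply sim_eq; auto.
Qed.
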